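(* Let $p>0$ and let $(u_n)_{n\in\mathbb{Z}}$ be a real sequence such that $s_n:=u_{n+2}-u_n$ satisfies $\sum_{n=-\infty}^{\infty}|s_n-2p|<\infty$, and such that $x_n:=\frac{u_{n+1}-u_{n-1}}{2p}\neq 0$ for all $n\in\mathbb{Z}$. Define sequences $(\omega_j(n))_{n\in\mathbb{Z}}$, $j=1,2,\dots$, by $$\omega_1(n)=1-\frac{1}{x_n\,x_{n-1}},\qquad \omega_2(n)=\Bigl(1-\frac{1}{x_{n-1}\,x_{n-2}}\Bigr)\frac{1}{x_n\,x_{n-1}},$$ $$\omega_{j+1}(n)=\omega_j(n-1)-\sum_{k=1}^{j}\omega_k(n-1)\,\omega_{j+1-k}(n),\qquad j=2,3,\dots.$$ Then for every $j\ge 1$, $\omega_j(n)\to 0$ as $|n|\to\infty$.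
   Context: These $\omega_j$ are the coefficients of the series solution $\omega=x_n\bigl(1+\sum_{j\ge1}\omega_j\lambda^j\bigr)$, $|\lambda|<1$, of the discrete Riccati equation $\omega_n(\omega_{n+1}-x_{n+1})-\lambda x_{n+1}\omega_n+\lambda=0$ associated with the lattice potential KdV equation. *)

(* Defs.v *)
From HB Require Import structures.
From mathcomp Require Import all_boot all_order all_algebra.
From mathcomp Require Import all_classical all_reals all_analysis.
Set Implicit Arguments. Unset Strict Implicit. Unset Printing Implicit Defensive.
Import Order.TTheory GRing.Theory Num.Theory.
Import numFieldNormedType.Exports.
Local Open Scope ring_scope.

Section Omega.
Variables (R : realType) (u : int -> R) (p : R).

Definition xs (n : int) : R := (u (n + 1) - u (n - 1)) / (2 * p).

Definition ss (n : int) : R := u (n + 2) - u n.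

Definition om1 (n : int) : R := 1 - 1 / (xs n * xs (n - 1)).
Definition om2 (n : int) : R :=
  (1 - 1 / (xs (n - 1) * xs (n - 2))) * (1 / (xs n * xs (n - 1))).

(* oms m = [:: omega_1; ...; omega_m] (0-indexed list: entry i is omega_(i+1)) *)
Fixpoint oms (m : nat) : seq (int -> R) :=
  match m with
  | 0 => [::]
  | 1 => [:: om1]
  | 2 => [:: om1; om2]
  | (j.+2 as m').+1 =>
      let s := oms m' in
      (* omega_{j+3}(n) = omega_{j+2}(n-1)
                          - sum_{k=1}^{j+2} omega_k(n-1) omega_{j+3-k}(n) *)
      s ++ [:: fun n : int =>
                 nth (fun _ => 0) s j.+1 (n - 1)
                 - \sum_(i < j.+2)
                     nth (fun _ => 0) s i (n - 1)
                     * nth (fun _ => 0) s (j.+1 - i)%N n]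
  end.

Definition omega (j : nat) (n : int) : R := nth (fun _ => 0) (oms j) j.-1 n.

End Omega.

(* Main.v *)
Require Import Defs.
From HB Require Import structures.
From mathcomp Require Import all_boot all_order all_algebra.
From mathcomp Require Import all_classical all_reals all_analysis.
Import Order.TTheory GRing.Theory Num.Theory.
Import numFieldNormedType.Exports.
Local Open Scope classical_set_scope.
Local Open Scope ring_scope.

Section Aux.
Variable R : realType.

Definition Zc (f : int -> R) (l : R) :=
  (fun n : nat => f (n%:Z)) @ \oo --> l /\
  (fun n : nat => f (- (n%:Z))) @ \oo --> l.

Lemma ZcD (f g : int -> R) (a b : R) : Zc f a -> Zc g b -> Zc (fun n => f n + g n) (a + b).
Proof. by move=> [f1 f2] [g1 g2]; split; [exact: (cvgD f1 g1)|exact: (cvgD f2 g2)]. Qed.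

Lemma ZcN f a : Zc f a -> Zc (fun n => - f n) (- a).
Proof. by move=> [f1 f2]; split; [exact: (cvgN f1)|exact: (cvgN f2)]. Qed.

Lemma ZcB f g a b : Zc f a -> Zc g b -> Zc (fun n => f n - g n) (a - b).
Proof. by move=> hf hg; apply: ZcD => //; apply: ZcN. Qed.

Lemma ZcM f g a b : Zc f a -> Zc g b -> Zc (fun n => f n * g n) (a * b).
Proof. by move=> [f1 f2] [g1 g2]; split; [exact: (cvgM f1 g1)|exact: (cvgM f2 g2)]. Qed.

Lemma ZcV f a : a != 0 -> Zc f a -> Zc (fun n => (f n)^-1) a^-1.
Proof. by move=> a0 [f1 f2]; split; [exact: (cvgV a0 f1)|exact: (cvgV a0 f2)]. Qed.

Lemma Zc_cst a : Zc (fun _ => a) a.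
Proof. by split; exact: cvg_cst. Qed.

Lemma Zc_shift f a : Zc f a -> Zc (fun n => f (n - 1)) a.
Proof.
move=> [f1 f2]; split.
  rewrite -(cvg_shiftn 1).
  suff -> : (fun n : nat => f ((n + 1)%N%:Z - 1)) = (fun n : nat => f n%:Z) by [].
  by apply: funext => n; congr f; rewrite PoszD addrK.
have := f2; rewrite -(cvg_shiftn 1).
suff -> : (fun n : nat => f (- (n + 1)%N%:Z)) = (fun n : nat => f (- n%:Z - 1)) by [].
by apply: funext => n; congr f; rewrite PoszD opprD.
Qed.

Lemma Zc_sum (I : Type) (r : seq I) (F : I -> int -> R) :
  (forall i, Zc (F i) 0) -> Zc (fun n => \sum_(i <- r) F i n) 0.
Proof.
move=> HF; elim: r => [|i r IH].
  rewrite (_ : (fun n => _) = fun _ => 0); first exact: Zc_cst.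
  by apply: funext => n; rewrite big_nil.
rewrite (_ : (fun n => _) = fun n => F i n + \sum_(j <- r) F j n); last first.
  by apply: funext => n; rewrite big_cons.
by have := ZcD _ _ _ _ (HF i) IH; rewrite addr0.
Qed.

End Aux.
Arguments Zc [R].
Arguments ZcD [R f g a b].
Arguments ZcN [R f a].
Arguments ZcB [R f g a b].
Arguments ZcM [R f g a b].
Arguments ZcV [R f a].
Arguments Zc_cst [R].
Arguments Zc_shift [R f a].

Lemma squeeze0 (R : realType) (f a : nat -> R) :
  (forall n, `|f n| <= a n) -> a @ \oo --> 0 -> f @ \oo --> 0.
Proof.
move=> fa ha; apply/cvgr0Pnorm_lt => e e0.
near=> t; apply: le_lt_trans (fa t) _; apply: le_lt_trans (ler_norm _) _.
by near: t; apply: cvgr0_norm_lt.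
Unshelve. all: by end_near.
Qed.

Lemma oms3 (R : realType) (u : int -> R) (p : R) j :
  oms u p j.+3 = oms u p j.+2 ++ [:: fun n : int =>
                 nth (fun _ => 0) (oms u p j.+2) j.+1 (n - 1)
                 - \sum_(i < j.+2)
                     nth (fun _ => 0) (oms u p j.+2) i (n - 1)
                     * nth (fun _ => 0) (oms u p j.+2) (j.+1 - i)%N n].
Proof. by []. Qed.

Lemma oms_Zc (R : realType) (u : int -> R) (p : R) :
  Zc (om1 u p) 0 -> Zc (om2 u p) 0 ->
  forall m, size (oms u p m) = m /\
    forall i, (i < m)%N -> Zc (nth (fun _ => 0) (oms u p m) i) 0.
Proof.
move=> h1 h2 m; elim/ltn_ind: m => -[|[|[|j]]] IH.
- by split => // i.
- by split => // -[].
- by split => // -[|[]].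
have [Hs Hz] := IH j.+2 (ltnSn _).
rewrite oms3; set s := oms u p j.+2 in Hs Hz *.
rewrite size_cat Hs; split; first by rewrite addn1.
move=> i hi; rewrite nth_cat Hs; case: ltnP => hi2; first exact: Hz.
have -> : i = j.+2 by apply/eqP; rewrite eqn_leq hi2 andbT -ltnS.
rewrite subnn.
have HF : forall k : 'I_j.+2, Zc (fun n => nth (fun _ => 0) s k (n - 1)
                 * nth (fun _ => 0) s (j.+1 - k)%N n) 0.
  move=> k; have := ZcM (Zc_shift (Hz k (ltn_ord k))) (Hz (j.+1 - k)%N _).
  by rewrite mul0r; apply; rewrite ltnS leq_subr.
have := ZcB (Zc_shift (Hz j.+1 (ltnSn _))) (@Zc_sum R _ (index_enum 'I_j.+2) _ HF).
by rewrite subr0.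
Qed.


Lemma cvg_eqn (R : realType) (f g : nat -> R) (l : R) :
  (forall n, f n = g n) -> g @ \oo --> l -> f @ \oo --> l.
Proof. by move=> /funext ->. Qed.

Lemma Zc_eq (R : realType) (f g : int -> R) (l : R) :
  (forall n, f n = g n) -> Zc g l -> Zc f l.
Proof. by move=> /funext ->. Qed.


Lemma cvg_aff (R : realType) (f : nat -> R) (c : R) :
  f @ \oo --> 0 -> c != 0 -> (fun n => (f n + c) * c^-1) @ \oo --> (1 : R).
Proof.
move=> hf c0; have -> : (1 : R) = (0 + c) * c^-1 by rewrite add0r mulfV.
exact: (cvgM (cvgD hf (cvg_cst c)) (cvg_cst c^-1)).
Qed.

Lemma shift1 (R : realType) (f : nat -> R) (l : R) :
  (fun n => f (n + 1)%N) @ \oo --> l -> f @ \oo --> l.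
Proof. by rewrite -(cvg_shiftn 1 f). Qed.

Arguments cvg_eqn [R f g l].
Arguments Zc_eq [R f g l].
Arguments cvg_aff [R f c].
Arguments shift1 [R f l].
Arguments squeeze0 [R f a].
Arguments oms_Zc [R u p].

Theorem proposition1 (R : realType) (u : int -> R) (p : R) :
  0 < p ->
  (exists M : R, forall N : nat,
     \sum_(i < N) (`|ss u (i%:Z) - 2 * p| + `|ss u (- (i.+1)%:Z) - 2 * p|) <= M) ->
  (forall n : int, xs u p n != 0) ->
  forall j : nat, (1 <= j)%N ->
    (fun n : nat => omega u p j (n%:Z)) @ \oo --> 0 /\
    (fun n : nat => omega u p j (- (n%:Z))) @ \oo --> 0.
Proof.
move=> p0 [M hM] hx j j1.
set a := fun i : nat => `|ss u i - 2 * p| + `|ss u (- (i.+1)%:Z) - 2 * p|.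
have ha : a @ \oo --> 0.
  apply: cvg_series_cvg_0; apply: nondecreasing_is_cvgn.
    by apply: (@nondecreasing_series _ a xpredT 0) => n _ _; rewrite addr_ge0.
  by exists M => x [n _ <-]; rewrite /series /= big_mkord; exact: hM.
have hpos : (fun i : nat => ss u i - 2 * p) @ \oo --> 0.
  by apply: squeeze0 ha => n; rewrite /a lerDl normr_ge0.
have hneg : (fun i : nat => ss u (- (i.+1)%:Z) - 2 * p) @ \oo --> 0.
  by apply: squeeze0 ha => n; rewrite /a lerDr normr_ge0.
have p2 : 2 * p != 0 by rewrite mulf_neq0 // gt_eqF.
have hxs : Zc (xs u p) 1.
  split.
    apply: shift1; apply: cvg_eqn (cvg_aff hpos p2) => n /=.
    by rewrite subrK /xs /ss PoszD addrK -addrA.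
  apply: cvg_eqn (cvg_aff hneg p2) => n /=.
  by rewrite subrK /xs /ss -[n.+1]addn1 PoszD opprD -addrA.
have X : Zc (fun n => xs u p n * xs u p (n - 1)) 1.
  by have := ZcM hxs (Zc_shift hxs); rewrite mulr1.
have hom1 : Zc (om1 u p) 0.
  have := ZcB (Zc_cst 1) (ZcM (Zc_cst 1) (ZcV (oner_neq0 R) X)).
  by rewrite invr1 mulr1 subrr.
have hom2 : Zc (om2 u p) 0.
  have := ZcM (Zc_shift hom1) (ZcB (Zc_cst 1) hom1); rewrite subr0 mul0r.
  apply: Zc_eq => n; rewrite /om2 /om1 (_ : n - 1 - 1 = n - 2); last by rewrite -addrA.
  by rewrite subKr.
have [_ H] := oms_Zc hom1 hom2 j.
by have := H j.-1; rewrite ltn_predL j1; apply.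
Qed.
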